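(* Let $X$ be a path-connected topological space admitting a universal cover, $\mathbb A$ an abelian group and $\mathfrak a\in H^1(X;\mathbb A)$. Let $i_L\colon L\to X$ be the inclusion of a path-connected subset such that $i_L^*\mathfrak a=0\in H^1(L;\mathbb A)$. If an action $\psi\colon G\to\mathrm{Homeo}(X,\mathfrak a)$ of a group $G$ preserves $L$ (i.e. $\psi(g)(L)=L$ for all $g\in G$), then $\psi^*[\mathfrak G]=0$ in $H^2(BG^\delta;\mathbb A)$.
   Context: $\mathrm{Homeo}(X,\mathfrak a)$ is the group of homeomorphisms $g$ of $X$ with $g^*\mathfrak a=\mathfrak a$. Fix a singular one-cocycle $\alpha$ representing $\mathfrak a$ and a point $x\in X$; define $\mathfrak G_{x,\alpha}\colon \mathrm{Homeo}(X,\mathfrak a)^2\to\mathbb A$ by $\mathfrak G_{x,\alpha}(g,h)=\int_\gamma g^*\alpha-\alpha$, where $\gamma$ is any path from $x$ to $hx$ and $\int_\gamma\sigma$ is the pairing of the chain $\gamma$ with the cochain $\sigma$. This is a group 2-cocycle whose cohomology class $[\mathfrak G]$ in the group cohomology of $\mathrm{Homeo}(X,\mathfrak a)$ (viewed as a discrete group) with trivial coefficients $\mathbb A$ is independent of $x$ and $\alpha$. $H^2(BG^\delta;\mathbb A)$ denotes the cohomology of $G$ as a discrete group, and $\psi^*[\mathfrak G]$ is the pullback of $[\mathfrak G]$ along $\psi$. *)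

(* Defs.v *)
From HB Require Import structures.
From mathcomp Require Import all_boot all_order all_algebra.
From mathcomp Require Import all_classical all_reals all_analysis.
From mathcomp Require Import Rstruct Rstruct_topology.
From Stdlib Require Rdefinitions.
Notation R := Rdefinitions.R.

Set Implicit Arguments.
Unset Strict Implicit.
Unset Printing Implicit Defensive.

Import Order.TTheory GRing.Theory Num.Theory.
Local Open Scope classical_set_scope.
Local Open Scope ring_scope.

Definition Delta1 : set R := [set t : R | 0 <= t <= 1].
(* Standard 2-simplex, vertices e0 = (0,0), e1 = (1,0), e2 = (0,1). *)
Definition Delta2 : set (R * R) :=
  [set st : R * R | 0 <= st.1 /\ 0 <= st.2 /\ st.1 + st.2 <= 1].

Lemma Delta1_0 : (0 : R) \in Delta1.
Proof. by apply/mem_set; rewrite /Delta1 /= lexx ler01. Qed.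
Lemma Delta1_1 : (1 : R) \in Delta1.
Proof. by apply/mem_set; rewrite /Delta1 /= lexx ler01. Qed.

Definition I0 : set_type Delta1 := exist _ 0 Delta1_0.
Definition I1 : set_type Delta1 := exist _ 1 Delta1_1.

(* The three face inclusions  Delta1 -> Delta2  (d_i omits vertex e_i). *)
Lemma face0_mem (t : set_type Delta1) :
  (1 - val t, val t) \in Delta2.
Proof.
case: t => t /set_mem /= /andP [t0 t1]; apply/mem_set; rewrite /Delta2 /=.
by rewrite subr_ge0 t1 t0 subrK lexx.
Qed.
Lemma face1_mem (t : set_type Delta1) : (0, val t) \in Delta2.
Proof.
case: t => t /set_mem /= /andP [t0 t1]; apply/mem_set; rewrite /Delta2 /=.
by rewrite lexx t0 add0r t1.
Qed.
Lemma face2_mem (t : set_type Delta1) : (val t, 0) \in Delta2.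
Proof.
case: t => t /set_mem /= /andP [t0 t1]; apply/mem_set; rewrite /Delta2 /=.
by rewrite lexx t0 addr0 t1.
Qed.

Definition face0 (t : set_type Delta1) : set_type Delta2 := exist (fun x => x \in Delta2) _ (face0_mem t).
Definition face1 (t : set_type Delta1) : set_type Delta2 := exist (fun x => x \in Delta2) _ (face1_mem t).
Definition face2 (t : set_type Delta1) : set_type Delta2 := exist (fun x => x \in Delta2) _ (face2_mem t).

Record path1 (X : topologicalType) := Path1 {
  path_fun :> set_type Delta1 -> X;
  path_cont : continuous path_fun }.

Definition cochain1 (X : topologicalType) (A : zmodType) := path1 X -> A.

Definition is_cocycle1 (X : topologicalType) (A : zmodType) (alpha : cochain1 X A) :=
  forall (sigma : set_type Delta2 -> X), continuous sigma ->
  forall p0 p1 p2 : path1 X,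
    (forall t, p0 t = sigma (face0 t)) ->
    (forall t, p1 t = sigma (face1 t)) ->
    (forall t, p2 t = sigma (face2 t)) ->
    alpha p0 - alpha p1 + alpha p2 = 0.

Definition is_coboundary1 (X : topologicalType) (A : zmodType) (beta : cochain1 X A) :=
  exists f : X -> A, forall p : path1 X, beta p = f (p I1) - f (p I0).

Definition cohomologous1 (X : topologicalType) (A : zmodType) (alpha beta : cochain1 X A) :=
  is_coboundary1 (fun p => alpha p - beta p).

Lemma pcomp_cont (Y X : topologicalType) (phi : Y -> X) (hphi : continuous phi)
  (p : path1 Y) : continuous (fun t => phi (p t)).
Proof. by move=> t; apply: continuous_comp; [exact: path_cont | exact: hphi]. Qed.

Definition pcomp (Y X : topologicalType) (phi : Y -> X) (hphi : continuous phi)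
  (p : path1 Y) : path1 X := @Path1 X (fun t => phi (p t)) (@pcomp_cont Y X phi hphi p).

Definition pullback1 (Y X : topologicalType) (A : zmodType) (phi : Y -> X)
  (hphi : continuous phi) (alpha : cochain1 X A) : cochain1 Y A :=
  fun p => alpha (pcomp hphi p).

Definition path_connected (X : topologicalType) :=
  (exists x : X, True) /\
  forall x y : X, exists p : path1 X, p I0 = x /\ p I1 = y.

Lemma set_val_continuous (X : topologicalType) (L : set X) :
  continuous (set_val : set_type L -> X).
Proof. exact: initial_continuous. Qed.

Definition path_connected_subset (X : topologicalType) (L : set X) :=
  path_connected (set_type L).

Definition simply_connected (Y : topologicalType) :=
  path_connected Y /\
  forall gamma : path1 Y, gamma I0 = gamma I1 ->
  exists H : set_type Delta1 * set_type Delta1 -> Y, continuous H /\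
    (forall s, H (s, I0) = gamma s) /\
    (forall s, H (s, I1) = gamma I0) /\
    (forall u, H (I0, u) = gamma I0) /\
    (forall u, H (I1, u) = gamma I0).

Definition covering_map (Y X : topologicalType) (p : Y -> X) :=
  continuous p /\ (forall x : X, exists y, p y = x) /\
  forall x : X, exists U : set X, open U /\ U x /\
    exists VV : set (set Y),
      p @^-1` U = \bigcup_(V in VV) V /\
      (forall V W, VV V -> VV W -> (V `&` W !=set0) -> V = W) /\
      (forall V, VV V -> open V /\
         p @` V = U /\ {in V &, injective p} /\
         exists q : X -> Y, {within U, continuous q} /\
           (forall u, U u -> V (q u) /\ p (q u) = u)).

Definition has_universal_cover (X : topologicalType) :=
  exists (Y : topologicalType) (p : Y -> X), covering_map p /\ simply_connected Y.

Definition is_homeomorphism (X : topologicalType) (f : X -> X) :=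
  continuous f /\ exists k : X -> X, continuous k /\ cancel f k /\ cancel k f.

(* Main.v *)
Require Import Defs.
From HB Require Import structures.
From mathcomp Require Import all_boot all_order all_algebra.
From mathcomp Require Import all_classical all_reals all_analysis.
From mathcomp Require Import Rstruct Rstruct_topology.
Local Open Scope classical_set_scope.
Local Open Scope ring_scope.
Import GRing.Theory.

Lemma path1_ext (X : topologicalType) (p q : path1 X) : (forall t, p t = q t) -> p = q.
Proof.
case: p q => [f fc] [g gc] /= H; have Hfg : f = g by apply: funext.
subst; congr Path1; exact: Prop_irrelevance.
Qed.

Lemma corestr_cont (Y X : topologicalType) (L : set X) (g : Y -> set_type L) :
  continuous (fun y => set_val (g y)) -> continuous g.
Proof.
move=> hc; apply/continuousP => U [A oA <-].
by move/continuousP: hc => /(_ A oA).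
Qed.

Lemma path_in_L (X : topologicalType) (L : set X) (p : path1 X) :
  (forall t, L (p t)) -> exists p' : path1 (set_type L), forall t, set_val (p' t) = p t.
Proof.
move=> hp.
pose g : set_type Delta1 -> set_type L := fun t => @exist X (fun x => x \in L) (p t) (mem_set (hp t)).
have gc : continuous g by apply: (@corestr_cont _ X L g); exact: path_cont.
by exists (Path1 gc).
Qed.
Lemma arith (A : zmodType) (Aq Aphq Ux0 Ugx0 Uhx0 bhx bx bhx0 bx0 : A) :
 bhx - bx = (Aq - (bx - bx0 + Aq) + Ux0 - Ugx0) + (Aq - Aphq + Ux0 - Uhx0)
   - (Aq - (bhx - bhx0 + Aphq) + Ux0 - (bhx0 - bx0 + (Uhx0 - Ux0) + Ugx0)).
Proof.
apply/eqP; rewrite -subr_eq0 !opprD !opprK !addrA.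
rewrite (ACl ((1*14)*(4*2)*(6*3)*(13*9)*(19*5)*(17*7)*(21*11)*(8*22)*(10*16)*(12*20)*(15*18))%AC).
by rewrite /= !subrr !addr0.
Qed.

Theorem theorem1p5 (X : topologicalType) (A : zmodType)
  (hX : path_connected X) (hXu : has_universal_cover X)
  (alpha : cochain1 X A) (halpha : is_cocycle1 alpha)
  (L : set X) (hL : path_connected_subset L)
  (hLa : is_coboundary1 (pullback1 (@set_val_continuous X L) alpha))
  (G : groupType) (psi : G -> X -> X)
  (psi_cont : forall g, continuous (psi g))
  (psi_homeo : forall g, is_homeomorphism (psi g))
  (psi_class : forall g, cohomologous1 (pullback1 (psi_cont g) alpha) alpha)
  (psi_mul : forall g h, psi (g * h)%g = psi g \o psi h)
  (psi_L : forall g, psi g @` L = L) :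
  forall x : X, exists f : G -> A,
    forall (g h : G) (gamma : path1 X),
      gamma I0 = x -> gamma I1 = psi h x ->
      pullback1 (psi_cont g) alpha gamma - alpha gamma = f g + f h - f (g * h)%g.
Proof.
move=> x.
case: hL => -[x0' _] hL2.
pose x0 := set_val x0'.
have Lx0 : L x0 by exact: set_mem (valP x0').
have [q [q0 q1]] := hX.2 x0 x.
case: hLa => u hu.
pose U (y : X) : A := match pselect (L y) with
  | left Hy => u (@exist X (fun z => z \in L) y (mem_set Hy)) | right _ => 0 end.
have hUval : forall z : set_type L, U (set_val z) = u z.
  case=> y hy; rewrite /U /=; case: pselect => [Hy|nH].
    by congr u; apply: eq_sig_hprop.
  by exfalso; apply: nH; exact: set_mem hy.
have hLpath : forall p : path1 X, (forall t, L (p t)) ->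
    alpha p = U (p I1) - U (p I0).
  move=> p hp; have [p' hp'] := @path_in_L X L p hp.
  have -> : p = Defs.pcomp (@set_val_continuous X L) p' by apply: path1_ext => t /=.
  by have := hu p'; rewrite /pullback1 => ->; rewrite /= !hUval.
have psiL : forall g y, L y -> L (psi g y).
  by move=> g y Ly; rewrite -(psi_L g); exists y.
exists (fun g => alpha q - alpha (Defs.pcomp (psi_cont g) q) + U x0 - U (psi g x0)).
move=> g h gamma g0 g1.
case: (psi_class g) => b hb.
have Lhx0 := psiL h x0 Lx0.
have [r [r0 r1]] := hL2 x0' (@exist X (fun z => z \in L) _ (mem_set Lhx0)).
pose rX := Defs.pcomp (@set_val_continuous X L) r.
have rXL : forall t, L (rX t) by move=> t; exact: set_mem (valP (r t)).
have E1 := hb gamma.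
have E2 := hb (Defs.pcomp (psi_cont h) q).
have E3 := hb q.
have E4 := hb rX.
have E5 := hLpath rX rXL.
have E6 := hLpath (Defs.pcomp (psi_cont g) rX) (fun t => psiL g _ (rXL t)).
have Hgh : Defs.pcomp (psi_cont (g * h)%g) q = Defs.pcomp (psi_cont g) (Defs.pcomp (psi_cont h) q).
  by apply: path1_ext => t /=; rewrite psi_mul.
rewrite Hgh psi_mul /=.
move: E1 E2 E3 E4 E5 E6; rewrite /pullback1 /= g0 g1 q0 q1 /rX /= r0 r1 /=.
rewrite -/x0.
have sv : set_val (@exist X (fun z => z \in L) (psi h x0) (mem_set Lhx0)) = psi h x0 by [].
rewrite !sv.
move=> -> /eqP; rewrite subr_eq => /eqP -> /eqP; rewrite subr_eq => /eqP ->.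
move=> E4 E5 E6; move: E4; rewrite E5 E6 => /eqP; rewrite subr_eq subr_eq => /eqP ->.
exact: arith.
Qed.
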